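(* Let $|\psi\rangle$ be a single-mode state of coherent rank $k$. Then for small real $\epsilon$, $$\hat a^\dagger|\psi\rangle=\frac1\epsilon(\mathbb I\otimes\langle0|)\,\hat B(2\epsilon,0)\,|\psi,1\rangle+O(\epsilon^2),$$ where the second mode is an auxiliary mode prepared in the Fock state $|1\rangle$ and projected onto the vacuum $|0\rangle$. Consequently $\hat a^\dagger$ can be implemented on $|\psi\rangle$ to arbitrary accuracy, the result having approximate coherent rank $2k$.
   Context: Two modes with annihilation operators $\hat a$ (system) and $\hat b$ (auxiliary); Fock states $|n\rangle$. The beamsplitter unitary is $\hat B(\theta,\phi)=e^{\frac\theta2(\hat a^\dagger\hat b e^{i\phi}-\hat a\hat b^\dagger e^{-i\phi})}$, so $\hat B(2\epsilon,0)=e^{\epsilon(\hat a^\dagger\hat b-\hat a\hat b^\dagger)}$. Coherent state $|\alpha\rangle=e^{-|\alpha|^2/2}\sum_n\frac{\alpha^n}{\sqrt{n!}}|n\rangle$. A state has coherent rank $k$ if it is a superposition of $k$ (product) coherent states; its approximate coherent rank is the smallest $k$ such that for every $\delta>0$ there is a coherent rank $k$ state with fidelity (after normalization) greater than $1-\delta$ to it. *)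

(* Defs.v *)
From mathcomp Require Import all_boot all_order all_algebra.
From mathcomp Require Import all_classical all_reals all_analysis.
From mathcomp Require Export complex.
Set Implicit Arguments. Unset Strict Implicit. Unset Printing Implicit Defensive.
Import Order.TTheory GRing.Theory Num.Theory.
Local Open Scope ring_scope.
Local Open Scope complex_scope.

Section QuantumOptics.
Variable R : realType.
Local Notation C := R[i].

Definition sqmod (z : C) : R := (complex.Re z) ^+ 2 + (complex.Im z) ^+ 2.

(* A single-mode (unnormalized) vector is given by its Fock coefficients
   psi n = <n|psi>;  a two-mode vector by Phi m n = <m,n|Phi>
   (first index: system mode a, second index: auxiliary mode b). *)

Definition coherent (alpha : C) (n : nat) : C :=
  (expR (- (sqmod alpha / 2)))%:C * alpha ^+ n / (Num.sqrt (n`!%:R : R))%:C.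

Definition has_coherent_rank (k : nat) (psi : nat -> C) : Prop :=
  exists (c alpha : 'I_k -> C),
    forall n, psi n = \sum_(i < k) c i * coherent (alpha i) n.

(* creation operator a^dagger |m> = sqrt(m+1) |m+1> *)
Definition adag (psi : nat -> C) (n : nat) : C :=
  if n is m.+1 then (Num.sqrt (n%:R : R))%:C * psi m else 0.

(* The generator a^dagger b - a b^dagger preserves the total photon number N.
   On the block of total number N, with basis |i, N-i> (i = 0..N), its
   (real) matrix is: *)
Definition bs_gen (N : nat) : 'M[R]_N.+1 :=
  \matrix_(i < N.+1, j < N.+1)
    (if i == j.+1 :> nat then Num.sqrt ((i * (N - j))%:R : R)       (* a^dag b *)
     else if j == i.+1 :> nat then - Num.sqrt ((j * (N - i))%:R : R) (* - a b^dag *)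
     else 0).

Definition bs_block (theta : R) {N : nat} (i j : 'I_N.+1) : R :=
  \big[+%R/0%R]_(0 <= k <oo) ((theta / 2) ^+ k / (k`!%:R) * ((bs_gen N) ^+ k) i j).

(* Beamsplitter B(theta, 0) = exp( theta/2 (a^dag b - a b^dag) ), acting
   block-diagonally on the total-photon-number blocks. *)
Definition beamsplitter (theta : R) (Phi : nat -> nat -> C) (m n : nat) : C :=
  let N := (m + n)%N in
  \sum_(j < N.+1) (bs_block theta (@inord N m) j)%:C * Phi (val j) (N - val j)%N.

Definition tensor_fock1 (psi : nat -> C) (m n : nat) : C :=
  if n == 1%N then psi m else 0.

Definition proj_aux_vac (Phi : nat -> nat -> C) (m : nat) : C := Phi m 0%N.

Definition inner_re (phi chi : nat -> C) : R :=
  \big[+%R/0%R]_(0 <= n <oo) (complex.Re (phi n) * complex.Re (chi n)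
                     + complex.Im (phi n) * complex.Im (chi n)).
Definition inner_im (phi chi : nat -> C) : R :=
  \big[+%R/0%R]_(0 <= n <oo) (complex.Re (phi n) * complex.Im (chi n)
                     - complex.Im (phi n) * complex.Re (chi n)).
Definition sqnorm (phi : nat -> C) : R := \big[+%R/0%R]_(0 <= n <oo) sqmod (phi n).

Definition fidelity (phi chi : nat -> C) : R :=
  (inner_re phi chi ^+ 2 + inner_im phi chi ^+ 2) / (sqnorm phi * sqnorm chi).

(* "approximate coherent rank <= r": for every delta > 0 there is a state of
   coherent rank r with fidelity > 1 - delta.  The approximate coherent rank is
   the least r with this property. *)
Definition approx_coherent_rank_le (r : nat) (phi : nat -> C) : Prop :=
  forall delta : R, 0 < delta ->
    exists chi, has_coherent_rank r chi /\ 1 - delta < fidelity phi chi.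

End QuantumOptics.

(* Main.v *)
Require Import Defs.
From mathcomp Require Import all_boot all_order all_algebra.
From mathcomp Require Import all_classical all_reals all_analysis.
From mathcomp Require Import complex.
From mathcomp Require Import ring lra zify.
Import Order.TTheory GRing.Theory Num.Theory.
Local Open Scope ring_scope.
Local Open Scope complex_scope.
Set Implicit Arguments. Unset Strict Implicit. Unset Printing Implicit Defensive.
Import numFieldNormedType.Exports.

Section Basics.
Variable R : realType.
Local Notation C := R[i].
Local Notation nc := (@Normc.normc R).

Lemma nc_ge0 (z : C) : 0 <= nc z.
Proof. by case: z => a b /=; exact: sqrtr_ge0. Qed.

Lemma sqmod_nc (z : C) : sqmod z = nc z ^+ 2.
Proof. by case: z => a b; rewrite /sqmod /= sqr_sqrtr // addr_ge0 // sqr_ge0. Qed.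

Lemma sqmod_ge0 (z : C) : 0 <= sqmod z.
Proof. by rewrite sqmod_nc sqr_ge0. Qed.

Lemma nc_real (x : R) : nc x%:C = `|x|.
Proof. by rewrite /Normc.normc /= expr0n /= addr0 sqrtr_sqr. Qed.

Lemma ncD (x y : C) : nc (x + y) <= nc x + nc y.
Proof. exact: (@le_normcD R x y). Qed.

Lemma ncM (x y : C) : nc (x * y) = nc x * nc y.
Proof. exact: Normc.normcM. Qed.

Lemma ncN (x : C) : nc (- x) = nc x.
Proof. exact: (@normcN R x). Qed.

Lemma ncB (x y : C) : nc (x - y) <= nc x + nc y.
Proof. by rewrite -(ncN y); apply: ncD. Qed.

Lemma ncX (x : C) n : nc (x ^+ n) = nc x ^+ n.
Proof.
elim: n => [|n IH]; first by rewrite !expr0 Normc.normc1.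
by rewrite !exprS ncM IH.
Qed.

Lemma ncV (x : C) : nc x^-1 = (nc x)^-1.
Proof. exact: Normc.normcV. Qed.

Lemma nc_div (x y : C) : nc (x / y) = nc x / nc y.
Proof. by rewrite ncM ncV. Qed.

Lemma nc_sum (I : Type) (r : seq I) (P : pred I) (f : I -> C) :
  nc (\sum_(i <- r | P i) f i) <= \sum_(i <- r | P i) nc (f i).
Proof.
elim/big_ind2 : _ => //; first by rewrite Normc.normc0.
by move=> a b x y H1 H2; apply: le_trans (ncD _ _) _; apply: lerD.
Qed.

Lemma sqmod_pos (z : C) : z != 0 -> 0 < sqmod z.
Proof.
move=> nz; rewrite lt_def sqmod_ge0 andbT sqmod_nc sqrf_eq0.
apply/eqP => /Normc.eq0_normc; exact/eqP.
Qed.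

Lemma sqmodD2 (a b : C) : sqmod (a + b) <= 2 * sqmod a + 2 * sqmod b.
Proof.
case: a => a1 a2; case: b => b1 b2; rewrite /sqmod /=.
have h1 : 0 <= (a1 - b1) ^+ 2 by rewrite sqr_ge0.
have h2 : 0 <= (a2 - b2) ^+ 2 by rewrite sqr_ge0.
rewrite -subr_ge0; apply: le_trans (addr_ge0 h1 h2) _; rewrite le_eqVlt; apply/orP; left; apply/eqP.
ring.
Qed.

Lemma inner_term (a b : C) :
  complex.Re a * complex.Re b + complex.Im a * complex.Im b
  = (sqmod a + sqmod b - sqmod (a - b)) / 2.
Proof.
case: a => a1 a2; case: b => b1 b2; rewrite /sqmod /=.
by field.
Qed.

Lemma series_exp_le (x : R) n : 0 <= x -> series (exp_coeff x) n <= expR x.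
Proof.
move=> x0; apply: nondecreasing_cvgn_le; last exact: is_cvg_series_exp_coeff.
by apply: nondecreasing_series => k _ _; exact: exp_coeff_ge0.
Qed.

Lemma sqrt_fact_gt0 n : 0 < Num.sqrt (n`!%:R : R).
Proof. by rewrite sqrtr_gt0 ltr0n fact_gt0. Qed.

Lemma gen_term (f : nat -> C) (c w : R) : 0 <= c -> 0 <= w ->
  (forall n, nc (f n) <= c * w ^+ n / Num.sqrt (n`!%:R)) ->
  forall n, sqmod (f n) <= c ^+ 2 * exp_coeff (w ^+ 2) n.
Proof.
move=> c0 w0 Hf n; rewrite sqmod_nc /exp_coeff /=.
have -> : c ^+ 2 * ((w ^+ 2) ^+ n / n`!%:R) = (c * w ^+ n / Num.sqrt (n`!%:R)) ^+ 2.
  by rewrite expr_div_n exprMn sqr_sqrtr ?ler0n // exprMn expr2 !mulrA.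
apply: lerXn2r; rewrite ?nnegrE ?nc_ge0 ?Hf //.
by rewrite mulr_ge0 ?invr_ge0 ?sqrtr_ge0 ?mulr_ge0 ?exprn_ge0.
Qed.

Lemma gen_bound (f : nat -> C) (c w : R) : 0 <= c -> 0 <= w ->
  (forall n, nc (f n) <= c * w ^+ n / Num.sqrt (n`!%:R)) ->
  forall M, \sum_(0 <= n < M) sqmod (f n) <= c ^+ 2 * expR (w ^+ 2).
Proof.
move=> c0 w0 Hf M.
apply: le_trans (_ : c ^+ 2 * series (exp_coeff (w ^+ 2)) M <= _).
  rewrite /series /= mulr_sumr; apply: ler_sum => n _; exact: gen_term.
by rewrite ler_wpM2l ?sqr_ge0 // series_exp_le // sqr_ge0.
Qed.

Lemma psum_nd (f : nat -> C) :
  {homo (fun M => \sum_(0 <= n < M) sqmod (f n)) : n m / (n <= m)%N >-> n <= m}.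
Proof. by apply: nondecreasing_series => k _ _; exact: sqmod_ge0. Qed.

Lemma gen_cvg (f : nat -> C) (c w : R) : 0 <= c -> 0 <= w ->
  (forall n, nc (f n) <= c * w ^+ n / Num.sqrt (n`!%:R)) ->
  cvgn (fun M => \sum_(0 <= n < M) sqmod (f n)) /\
  limn (fun M => \sum_(0 <= n < M) sqmod (f n)) <= c ^+ 2 * expR (w ^+ 2).
Proof.
move=> c0 w0 Hf.
have cv : cvgn (fun M => \sum_(0 <= n < M) sqmod (f n)).
  apply: nondecreasing_is_cvgn; first exact: psum_nd.
  by exists (c ^+ 2 * expR (w ^+ 2)) => _ [M _ <-]; exact: gen_bound.
split => //; apply: limr_le => //; apply: nearW => M; exact: gen_bound.
Qed.

Lemma psum_le_lim (f : nat -> C) M :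
  cvgn (fun M => \sum_(0 <= n < M) sqmod (f n)) ->
  \sum_(0 <= n < M) sqmod (f n) <= limn (fun M => \sum_(0 <= n < M) sqmod (f n)).
Proof. by move=> cv; apply: nondecreasing_cvgn_le => //; exact: psum_nd. Qed.

End Basics.

Section Psi.
Variable R : realType.
Local Notation C := R[i].
Local Notation nc := (@Normc.normc R).

Lemma coh_nc (a : C) n : nc (coherent a n) <= nc a ^+ n / Num.sqrt (n`!%:R).
Proof.
rewrite /coherent !nc_div ncM !nc_real ncX.
rewrite (ger0_norm (sqrtr_ge0 _)) ger0_norm ?expR_ge0 //.
rewrite ler_wpM2r ?invr_ge0 ?sqrtr_ge0 // ler_piMl ?exprn_ge0 ?nc_ge0 //.
by rewrite expR_le1 oppr_le0 divr_ge0 ?sqmod_ge0.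
Qed.

Lemma le_sum_one (k : nat) (g : 'I_k -> R) (i : 'I_k) :
  (forall j, 0 <= g j) -> g i <= \sum_j g j.
Proof.
move=> g0; rewrite (bigD1 i) //= lerDl; apply: sumr_ge0 => j _; exact: g0.
Qed.

Definition csum {k} (c : 'I_k -> C) := \sum_i nc (c i).
Definition abound {k} (a : 'I_k -> C) := 1 + \sum_i nc (a i).

Lemma csum_ge0 k (c : 'I_k -> C) : 0 <= csum c.
Proof. by apply: sumr_ge0 => i _; exact: nc_ge0. Qed.

Lemma abound_ge1 k (a : 'I_k -> C) : 1 <= abound a.
Proof. by rewrite /abound lerDl; apply: sumr_ge0 => i _; exact: nc_ge0. Qed.

Lemma abound_ge k (a : 'I_k -> C) i : nc (a i) + 1 <= abound a.
Proof.
rewrite /abound addrC lerD2l; apply: le_sum_one => j; exact: nc_ge0.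
Qed.

Lemma psi_bound k (c a : 'I_k -> C) (psi : nat -> C) :
  (forall n, psi n = \sum_(i < k) c i * coherent (a i) n) ->
  forall n, nc (psi n) <= csum c * abound a ^+ n / Num.sqrt (n`!%:R).
Proof.
move=> Hpsi n; rewrite Hpsi; apply: le_trans (nc_sum _ _ _) _.
rewrite /csum mulr_suml mulr_suml; apply: ler_sum => i _.
rewrite ncM -mulrA ler_wpM2l ?nc_ge0 //; apply: le_trans (coh_nc _ _) _.
rewrite ler_wpM2r ?invr_ge0 ?sqrtr_ge0 //; apply: lerXn2r; rewrite ?nnegrE ?nc_ge0 //.
- by apply: le_trans (abound_ge1 a); rewrite ler01.
- by apply: le_trans (abound_ge a i); rewrite lerDl.
Qed.

End Psi.

Section Mat.
Variable R : realType.
Variable N : nat.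
Local Notation G := (bs_gen R N).

Lemma G_nz (l j : 'I_N.+1) : G l j != 0 -> odd (l + j).
Proof.
rewrite /bs_gen mxE.
have [->|_] := eqVneq (l : nat) j.+1; first by rewrite addSn /= addnn odd_double.
have [->|_] := eqVneq (j : nat) l.+1; first by rewrite addnS /= addnn odd_double.
by rewrite eqxx.
Qed.

Lemma G_par k (i j : 'I_N.+1) : odd (i + j + k) -> (G ^+ k) i j = 0.
Proof.
elim: k i j => [|k IH] i j.
  rewrite addn0 expr0 mxE => Hodd.
  case: eqP => [Hij|]; last by rewrite mulr0n.
  by move: Hodd; rewrite Hij addnn odd_double.
move=> Hodd; rewrite exprSr -mulmxE mxE big1 // => l _.
have [Hl|Hl] := eqVneq (G l j) 0; first by rewrite Hl mulr0.
rewrite IH ?mul0r //; move: (G_nz Hl) Hodd; rewrite !oddD /= .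
by case: (odd i); case: (odd j); case: (odd k); case: (odd l).
Qed.

Lemma sum_ind_eq n a : \sum_(0 <= l < n) ((l : nat) == a)%:R = (a < n)%:R :> R.
Proof.
elim: n => [|n IH]; first by rewrite big_geq.
rewrite big_nat_recr //= IH; case: (ltngtP a n) => h.
- by rewrite (ltn_trans h (ltnSn _)) addr0.
- by rewrite ltnNge h addr0.
- by rewrite h ltnSn add0r.
Qed.

Lemma sum_ind_le n a : \sum_(l < n) ((l : nat) == a)%:R <= 1 :> R.
Proof.
rewrite -(big_mkord xpredT (fun l => ((l : nat) == a)%:R)) sum_ind_eq.
by case: (a < n)%N; rewrite ?ler01 ?lexx.
Qed.

Lemma G_entry (l j : 'I_N.+1) :
  `|G l j| <= N%:R * ((l : nat) == j.+1)%:R + N%:R * ((l : nat) == j.-1)%:R.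
Proof.
have sq (a b : nat) : (a <= N)%N -> (b <= N)%N -> Num.sqrt ((a * b)%:R : R) <= N%:R.
  move=> ha hb; apply: le_trans (_ : _ <= Num.sqrt ((N%:R : R) ^+ 2)) _; last first.
    by rewrite sqrtr_sqr ger0_norm ?ler0n.
  rewrite ler_sqrt ?sqr_ge0 // -natrX ler_nat expnS expn1 leq_mul //.
rewrite /bs_gen mxE.
have [Hl|_] := eqVneq (l : nat) j.+1.
  rewrite Hl ger0_norm ?sqrtr_ge0 // mulr1.
  apply: le_trans (sq _ _ _ _) _; [ by rewrite -Hl -ltnS ltn_ord | by rewrite leq_subr | ].
  by rewrite lerDl mulr_ge0 ?ler0n.
have [Hj|_] := eqVneq (j : nat) l.+1.
  rewrite normrN ger0_norm ?sqrtr_ge0 // Hj /= eqxx mulr1.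
  apply: le_trans (sq _ _ _ _) _; [ by rewrite -Hj -ltnS ltn_ord | by rewrite leq_subr | ].
  by rewrite lerDr mulr_ge0 ?ler0n.
by rewrite normr0 addr_ge0 // mulr_ge0 ?ler0n.
Qed.

Lemma G_colsum (j : 'I_N.+1) : \sum_(l < N.+1) `|G l j| <= 2 * N%:R.
Proof.
apply: le_trans (ler_sum _ (fun l _ => G_entry l j)) _.
rewrite big_split /= -!mulr_sumr mulr2n mulrDl mul1r.
by apply: lerD; rewrite ler_piMr ?ler0n // sum_ind_le.
Qed.

Lemma G_pow_bound k (i j : 'I_N.+1) : `|(G ^+ k) i j| <= (2 * N%:R) ^+ k.
Proof.
elim: k i j => [|k IH] i j.
  by rewrite expr0 mxE; case: eqP; rewrite ?mulr1n ?mulr0n ?normr1 ?normr0 ?ler01.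
rewrite exprSr -mulmxE mxE exprSr.
apply: le_trans (ler_norm_sum _ _ _) _.
apply: le_trans (_ : \sum_(l < N.+1) (2 * N%:R) ^+ k * `|G l j| <= _).
  apply: ler_sum => l _; rewrite normrM ler_wpM2r //; exact: IH.
by rewrite -mulr_sumr ler_wpM2l ?exprn_ge0 ?mulr_ge0 ?ler0n // G_colsum.
Qed.

End Mat.

Section Block.
Variable R : realType.

Lemma block_est (m : nat) (eps : R) : `|eps| <= 1 ->
  `|bs_block (2 * eps) (inord m.+1 : 'I_m.+2) (inord m) - eps * Num.sqrt (m.+1%:R)|
    <= `|eps| ^+ 3 * expR (2 * m.+1%:R).
Proof.
move=> he.
set N := m.+1.
set G := bs_gen R N.
set i : 'I_N.+1 := inord N.
set j : 'I_N.+1 := inord m.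
have vi : (i : nat) = N by rewrite inordK.
have vj : (j : nat) = m by rewrite inordK // ltnS ltnW.
have h2 : 2 * eps / 2 = eps by rewrite [2 * eps]mulrC mulfK // pnatr_eq0.
set T := fun k => (eps ^+ k / k`!%:R * (G ^+ k) i j).
set S : nat -> R := fun n => \sum_(0 <= k < n) T k.
have bsE : bs_block (2 * eps) i j = limn S.
  by rewrite /bs_block h2.
have N0 : (0 : R) <= N%:R by rewrite ler0n.
have Tb k : `|T k| <= exp_coeff (2 * N%:R * `|eps|) k.
  rewrite /T /exp_coeff /= normrM normf_div normrX [`|k`!%:R|]ger0_norm ?ler0n //.
  apply: le_trans (_ : _ <= `|eps| ^+ k / k`!%:R * (2 * N%:R) ^+ k) _.
    by rewrite ler_wpM2l ?divr_ge0 ?exprn_ge0 ?ler0n // G_pow_bound.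
  by rewrite le_eqVlt; apply/orP; left; apply/eqP; rewrite [LHS]mulrC mulrA !exprMn.
have cv : cvgn S.
  apply: normed_cvg; apply: (@series_le_cvg _ _ (exp_coeff (2 * N%:R * `|eps|))).
  - by move=> n; rewrite normr_ge0.
  - by move=> n; apply: exp_coeff_ge0; rewrite mulr_ge0 ?mulr_ge0 ?ler0n.
  - exact: Tb.
  - exact: is_cvg_series_exp_coeff.
set c := eps * Num.sqrt (N%:R).
have Ub k : `|T k - (k == 1%N)%:R * c| <= `|eps| ^+ 3 * exp_coeff (2 * N%:R) k.
  case: k => [|[|[|k]]].
  - have ij : (i == j) = false.
      by apply/negbTE; rewrite -val_eqE /= vi vj neq_ltn ltnSn orbT.
    rewrite /T expr0 mxE ij mulr0n mulr0 /= mul0r subr0 normr0.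
    by rewrite mulr_ge0 ?exprn_ge0 // exp_coeff_ge0 // mulr_ge0 ?ler0n.
  - rewrite /T expr1 /G /bs_gen mxE vi vj /c /N eqxx subSnn muln1 /= divr1 mul1r.
    rewrite subrr normr0.
    by rewrite mulr_ge0 ?exprn_ge0 // exp_coeff_ge0 // mulr_ge0 ?ler0n.
  - rewrite /T G_par ?vi ?vj; last by rewrite /N !oddD /=; case: (odd m).
    rewrite mulr0 /= mul0r subr0 normr0.
    by rewrite mulr_ge0 ?exprn_ge0 // exp_coeff_ge0 // mulr_ge0 ?ler0n.
  - rewrite /= mul0r subr0; apply: le_trans (Tb _) _.
    rewrite /exp_coeff /= exprMn [_ * `|eps| ^+ _]mulrC -mulrA ler_wpM2r //.
      by apply: ler_wiXn2l => //; rewrite normr_ge0.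
have Sb n : (2 <= n)%N -> `|S n - c| <= `|eps| ^+ 3 * expR (2 * N%:R).
  move=> hn.
  have -> : S n - c = \sum_(0 <= k < n) (T k - (k == 1%N)%:R * c).
    rewrite /S sumrB -mulr_suml sum_ind_eq hn mul1r //.
  apply: le_trans (ler_norm_sum _ _ _) _.
  apply: le_trans (_ : \sum_(0 <= k < n) `|eps| ^+ 3 * exp_coeff (2 * N%:R) k <= _).
    by apply: ler_sum => k _; exact: Ub.
  rewrite -mulr_sumr ler_wpM2l ?exprn_ge0 //.
  exact: series_exp_le (mulr_ge0 _ N0).
rewrite bsE ler_norml; apply/andP; split.
- rewrite lerBrDr; apply: limr_ge => //; exists 2%N => // n /= hn.
  have := Sb n hn; rewrite ler_norml => /andP[h _]; by rewrite -lerBrDr.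
- rewrite lerBlDr; apply: limr_le => //; exists 2%N => // n /= hn.
  have := Sb n hn; rewrite ler_norml => /andP[_ h]; by rewrite -lerBlDr.
Qed.

End Block.

Section Part1.
Variable R : realType.
Local Notation C := R[i].
Local Notation nc := (@Normc.normc R).

Lemma bs_red0 (psi : nat -> C) th :
  proj_aux_vac (beamsplitter th (tensor_fock1 psi)) 0 = 0.
Proof. by rewrite /proj_aux_vac /beamsplitter /= big_ord1 /tensor_fock1 /= mulr0. Qed.

Lemma bs_redS (psi : nat -> C) th m :
  proj_aux_vac (beamsplitter th (tensor_fock1 psi)) m.+1 =
  (bs_block th (inord m.+1 : 'I_m.+2) (inord m))%:C * psi m.
Proof.
rewrite /proj_aux_vac /beamsplitter /= addn0 big_ord_recr /= big_ord_recr /=.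
rewrite big1 ?add0r; last first.
  move=> j _; rewrite /tensor_fock1 /=.
  have -> : (m.+1 - j == 1)%N = false.
    apply/negbTE; have := ltn_ord j; lia.
  by rewrite mulr0.
rewrite /tensor_fock1 subnn /= mulr0 addr0 subSnn eqxx.
congr (_%:C * _); congr bs_block; apply/val_inj; rewrite /= inordK //.
Qed.


Lemma part1 (k : nat) (psi : nat -> C) :
  has_coherent_rank k psi ->
  (exists (K d : R), 0 < d /\
     forall eps : R, eps != 0 -> `|eps| < d ->
       forall M : nat,
         \sum_(n < M)
            sqmod (adag psi n
                   - (eps^-1)%:C *
                       proj_aux_vac (beamsplitter (2 * eps) (tensor_fock1 psi)) n)
         <= (K * eps ^+ 2) ^+ 2).
Proof.
move=> [c [a Hpsi]].
set c0 := csum c; set A := abound a.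
have c00 : 0 <= c0 by exact: csum_ge0.
have A0 : 0 <= A by apply: le_trans (abound_ge1 a); rewrite ler01.
set E2 := expR (2 : R).
set w := E2 * A.
have w0 : 0 <= w by rewrite mulr_ge0 ?expR_ge0.
exists (E2 * c0 * expR (w ^+ 2)), 1; split => // eps e0 he M.
set err := fun n => adag psi n - (eps^-1)%:C *
   proj_aux_vac (beamsplitter (2 * eps) (tensor_fock1 psi)) n.
change (\sum_(n < M) sqmod (err n) <= (E2 * c0 * expR (w ^+ 2) * eps ^+ 2) ^+ 2).
have err0 : err 0%N = 0 by rewrite /err bs_red0 /= mulr0 subr0.
have errS m : nc (err m.+1) <= (eps ^+ 2 * E2 * c0) * w ^+ m / Num.sqrt (m`!%:R).
  rewrite /err bs_redS /adag.
  set b := bs_block _ _ _.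
  have -> : (Num.sqrt (m.+1%:R))%:C * psi m - (eps^-1)%:C * (b%:C * psi m)
          = (Num.sqrt (m.+1%:R) - eps^-1 * b)%:C * psi m.
    by rewrite rmorphB rmorphM /= mulrA mulrBl.
  rewrite ncM nc_real.
  have hb := block_est m (ltW he).
  have -> : Num.sqrt (m.+1%:R) - eps^-1 * b = - (eps^-1 * (b - eps * Num.sqrt (m.+1%:R))).
    by rewrite mulrBr mulrA mulVf // mul1r opprB.
  rewrite normrN normrM normfV.
  apply: le_trans (_ : `|eps|^-1 * (`|eps| ^+ 3 * expR (2 * m.+1%:R)) * nc (psi m) <= _).
    by rewrite ler_wpM2r ?nc_ge0 // ler_wpM2l ?invr_ge0 ?normr_ge0.
  have -> : `|eps|^-1 * (`|eps| ^+ 3 * expR (2 * m.+1%:R)) = eps ^+ 2 * (E2 * E2 ^+ m).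
    rewrite mulrC expRM_natr -/E2 -[eps ^+ 2]real_normK ?num_real // [E2 ^+ m.+1]exprS.
    have ne : `|eps| != 0 by rewrite normr_eq0.
    by field.
  apply: le_trans (_ : eps ^+ 2 * (E2 * E2 ^+ m) * (c0 * A ^+ m / Num.sqrt (m`!%:R)) <= _).
    apply: ler_wpM2l; first by apply: mulr_ge0; [exact: sqr_ge0 | apply: mulr_ge0; [exact: expR_ge0 | exact: exprn_ge0 (expR_ge0 _)]].
    exact: psi_bound.
  by rewrite /w exprMn le_eqVlt; apply/orP; left; apply/eqP; ring.
case: M => [|M]; first by rewrite big_ord0 sqr_ge0.
rewrite big_ord_recl err0 /sqmod /= expr0n /= addr0 add0r.
have -> : \sum_(i < M) sqmod (err (bump 0 i)) = \sum_(0 <= i < M) sqmod (err i.+1).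
  by rewrite big_mkord.
apply: le_trans (gen_bound (f := fun m => err m.+1) _ w0 errS M) _.
  by apply: mulr_ge0 => //; apply: mulr_ge0; [exact: sqr_ge0 | exact: expR_ge0].
have ex1 : 1 <= expR (w ^+ 2) by rewrite -expR0 ler_expR sqr_ge0.
have -> : (E2 * c0 * expR (w ^+ 2) * eps ^+ 2) ^+ 2
   = (eps ^+ 2 * E2 * c0) ^+ 2 * (expR (w ^+ 2) * expR (w ^+ 2)) by ring.
rewrite ler_wpM2l ?sqr_ge0 // ler_peMl ?expR_ge0 //.
Qed.

End Part1.

Section Part2a.
Variable R : realType.
Local Notation C := R[i].
Local Notation nc := (@Normc.normc R).

Definition kap (a : C) : C := (expR (- (sqmod a / 2)))%:C.
Definition sf (n : nat) : C := (Num.sqrt (n`!%:R : R))%:C.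
Definition Dn (a : C) (n : nat) : C := n%:R * a ^+ n.-1.

Lemma coherentE a n : coherent a n = kap a * a ^+ n / sf n.
Proof. by []. Qed.

Lemma sf_neq0 n : sf n != 0.
Proof. by rewrite /sf fmorph_eq0 sqrtr_eq0 -ltNge ltr0n fact_gt0. Qed.


Lemma Dn_succ a n : Dn a n.+1 = a * Dn a n + a ^+ n.
Proof. by case: n => [|n]; rewrite /Dn /= ?mul0r ?mulr0 ?add0r ?mul1r // exprS; rewrite -addn1 natrD; ring. Qed.

Lemma nc_nat n : nc (n%:R) = n%:R.
Proof. by rewrite -(rmorph_nat (real_complex R)) nc_real ger0_norm ?ler0n. Qed.

Lemma Dn_bound a n : nc (Dn a n) <= n%:R * (nc a + 1) ^+ n.
Proof.
rewrite /Dn ncM nc_nat ncX ler_wpM2l ?ler0n //.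
have h1 : nc a <= nc a + 1 by rewrite lerDl.
apply: le_trans (_ : (nc a + 1) ^+ n.-1 <= _).
  by apply: lerXn2r; rewrite ?nnegrE ?nc_ge0 ?addr_ge0 ?nc_ge0.
apply: ler_weXn2l; first by rewrite lerDr nc_ge0.
exact: leq_pred.
Qed.

Definition en (a : C) (t : R) (n : nat) : C :=
  (a + t%:C) ^+ n - a ^+ n - t%:C * Dn a n.

Lemma en_succ a t n : en a t n.+1 = (a + t%:C) * en a t n + t%:C ^+ 2 * Dn a n.
Proof. rewrite /en Dn_succ !exprS; ring. Qed.

Lemma en_bound a t n : 0 <= t -> t <= 1 ->
  nc (en a t n) <= t ^+ 2 * (n%:R) ^+ 2 * (nc a + 1) ^+ n.
Proof.
move=> t0 t1; set B := nc a + 1.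
have B1 : 1 <= B by rewrite lerDr nc_ge0.
have hB : nc (a + t%:C) <= B.
  by apply: le_trans (ncD _ _) _; rewrite nc_real ger0_norm // lerD2l.
elim: n => [|n IH].
  by rewrite /en /Dn !expr0 subrr mul0r mulr0 subr0 Normc.normc0 expr0n /= mulr0 mul0r.
rewrite en_succ; apply: le_trans (ncD _ _) _.
rewrite (ncM (a + t%:C)) (ncM (t%:C ^+ 2)) ncX nc_real ger0_norm //.
have hD := Dn_bound a n; rewrite -/B in hD.
have Bn0 : 0 <= B ^+ n by rewrite exprn_ge0 // (le_trans ler01 B1).
have e0 : 0 <= nc (en a t n) by exact: nc_ge0.
have D0 : 0 <= nc (Dn a n) by exact: nc_ge0.
have s1 : nc (a + t%:C) * nc (en a t n) <= B * (t ^+ 2 * n%:R ^+ 2 * B ^+ n).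
  by apply: ler_pM => //; exact: nc_ge0.
have s2 : t ^+ 2 * nc (Dn a n) <= t ^+ 2 * (n%:R * B ^+ n).
  by rewrite ler_wpM2l ?sqr_ge0.
apply: le_trans (lerD s1 s2) _.
rewrite [B ^+ n.+1]exprS -natr1.
have n0 : (0 : R) <= n%:R by rewrite ler0n.
have t20 : 0 <= t ^+ 2 by rewrite sqr_ge0.
have h : n%:R * B ^+ n <= n%:R * (B * B ^+ n) by rewrite ler_wpM2l // ler_peMl.
have -> : B * (t ^+ 2 * n%:R ^+ 2 * B ^+ n) + t ^+ 2 * (n%:R * B ^+ n)
   = t ^+ 2 * (B * n%:R ^+ 2 * B ^+ n + n%:R * B ^+ n) by ring.
have -> : t ^+ 2 * (n%:R + 1) ^+ 2 * (B * B ^+ n)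
   = t ^+ 2 * ((B * n%:R ^+ 2 * B ^+ n + n%:R * (B * B ^+ n)) + (n%:R + 1) * (B * B ^+ n)) by ring.
apply: ler_wpM2l => //; rewrite -addrA lerD2l; apply: le_trans h _.
rewrite lerDl mulr_ge0 ?addr_ge0 ?ler01 ?mulr_ge0 //.
exact: le_trans ler01 B1.
Qed.

Lemma nat_sq_le n : ((n%:R : R) ^+ 2) <= 4%:R ^+ n.
Proof.
rewrite -!natrX ler_nat.
have h : (n <= 2 ^ n)%N by apply: ltnW; exact: ltn_expl.
have -> : (4 ^ n = 2 ^ n * 2 ^ n)%N by rewrite -expnMn.
by rewrite expnS expn1 leq_mul.
Qed.


Lemma kap_neq0 a : kap a != 0.
Proof. by rewrite /kap fmorph_eq0 gt_eqF ?expR_gt0. Qed.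

Lemma nc_kap a : nc (kap a) <= 1.
Proof.
rewrite /kap nc_real ger0_norm ?expR_ge0 // expR_le1 oppr_le0.
by rewrite divr_ge0 ?sqmod_ge0.
Qed.

Lemma nc_sf n : nc (sf n) = Num.sqrt (n`!%:R).
Proof. by rewrite /sf nc_real ger0_norm ?sqrtr_ge0. Qed.

Lemma phi_form k (c a : 'I_k -> C) (psi : nat -> C) :
  (forall n, psi n = \sum_(i < k) c i * coherent (a i) n) ->
  forall n, adag psi n = \sum_(i < k) c i * (kap (a i) * Dn (a i) n / sf n).
Proof.
move=> Hpsi [|m].
  by rewrite /adag; symmetry; apply: big1 => i _; rewrite /Dn mulr0n !mul0r mulr0 mul0r mulr0.
rewrite /adag Hpsi mulr_sumr; apply: eq_bigr => i _; rewrite coherentE /Dn /=.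
have keyR : Num.sqrt (m.+1%:R) / Num.sqrt (m`!%:R) = m.+1%:R / Num.sqrt (m.+1`!%:R) :> R.
  rewrite factS natrM sqrtrM ?ler0n //.
  have u0 : Num.sqrt (m.+1%:R : R) != 0 by rewrite gt_eqF // sqrtr_gt0 ltr0n.
  have v0 : Num.sqrt (m`!%:R : R) != 0 by rewrite gt_eqF // sqrtr_gt0 ltr0n fact_gt0.
  rewrite -{2}[m.+1%:R](@sqr_sqrtr _ (m.+1%:R : R)) ?ler0n //.
  by rewrite expr2 invfM mulrA mulfK.
have key : (Num.sqrt (m.+1%:R))%:C * (sf m)^-1 = m.+1%:R * (sf m.+1)^-1.
  have := congr1 (real_complex R) keyR.
  by rewrite !rmorphM /= !fmorphV rmorph_nat.
transitivity (c i * kap (a i) * a i ^+ m * ((Num.sqrt (m.+1%:R))%:C * (sf m)^-1)).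
  by ring.
by rewrite key; ring.
Qed.

Definition cc k (c a : 'I_k -> C) (t : R) (i : 'I_(k + k)) : C :=
  match fintype.split i with
  | inl j => c j * kap (a j) / (t%:C * kap (a j + t%:C))
  | inr j => - c j / t%:C end.
Definition bb k (a : 'I_k -> C) (t : R) (i : 'I_(k + k)) : C :=
  match fintype.split i with inl j => a j + t%:C | inr j => a j end.
Definition chi k (c a : 'I_k -> C) (t : R) (n : nat) : C :=
  \sum_(i < k + k) cc c a t i * coherent (bb a t i) n.

Lemma chi_form k (c a : 'I_k -> C) t n :
  chi c a t n = \sum_(j < k) (c j * kap (a j) / (t%:C * kap (a j + t%:C)) * coherent (a j + t%:C) n)
              + \sum_(j < k) (- c j / t%:C * coherent (a j) n).
Proof.
rewrite /chi big_split_ord /=; congr (_ + _); apply: eq_bigr => j _.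
- by rewrite /cc /bb (unsplitK (inl j)).
- by rewrite /cc /bb (unsplitK (inr j)).
Qed.

Lemma diff_form k (c a : 'I_k -> C) (psi : nat -> C) t :
  (forall n, psi n = \sum_(i < k) c i * coherent (a i) n) -> t != 0 ->
  forall n, adag psi n - chi c a t n =
    \sum_(j < k) (c j * kap (a j) / (t%:C * sf n) * - en (a j) t n).
Proof.
move=> Hpsi t0 n; rewrite (phi_form Hpsi) chi_form -big_split -sumrB /=.
apply: eq_bigr => j _; rewrite !coherentE /en.
have k1 := kap_neq0 (a j + t%:C).
have s0 := sf_neq0 n.
have tc : t%:C != 0 by rewrite fmorph_eq0.
set K' := kap (a j + t%:C); set X := t%:C; set Z := sf n.
rewrite !invfM.
transitivity (c j * kap (a j) * Dn (a j) n / Z - c j * kap (a j) * X^-1 * (K' * K'^-1) * (a j + X) ^+ n / Z + c j * X^-1 * kap (a j) * a j ^+ n / Z).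
  by ring.
rewrite mulfV // mulr1.
symmetry; transitivity (c j * kap (a j) * X^-1 / Z * (a j ^+ n - (a j + X) ^+ n) + c j * kap (a j) * (X * X^-1) / Z * Dn (a j) n).
  by ring.
by rewrite mulfV // mulr1; ring.
Qed.


Lemma nat_le_2exp n : (n%:R : R) <= 2%:R ^+ n.
Proof. by rewrite -natrX ler_nat ltnW // ltn_expl. Qed.

Lemma phi_bound k (c a : 'I_k -> C) (psi : nat -> C) :
  (forall n, psi n = \sum_(i < k) c i * coherent (a i) n) ->
  forall n, nc (adag psi n) <= csum c * (2%:R * abound a) ^+ n / Num.sqrt (n`!%:R).
Proof.
move=> Hpsi n; rewrite (phi_form Hpsi); apply: le_trans (nc_sum _ _ _) _.
set s := Num.sqrt (n`!%:R : R).
have s0 : 0 <= s^-1 by rewrite invr_ge0 sqrtr_ge0.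
rewrite (_ : csum c * (2%:R * abound a) ^+ n / s = \sum_i nc (c i) * ((2%:R * abound a) ^+ n / s)); last first.
  by rewrite /csum -mulrA mulr_suml.
apply: ler_sum => i _; rewrite ncM nc_div ncM nc_sf -/s ler_wpM2l ?nc_ge0 //.
rewrite ler_wpM2r //.
apply: le_trans (_ : 1 * nc (Dn (a i) n) <= _).
  by rewrite ler_wpM2r ?nc_ge0 ?nc_kap.
rewrite mul1r; apply: le_trans (Dn_bound _ _) _.
rewrite exprMn; apply: ler_pM; rewrite ?ler0n ?exprn_ge0 ?addr_ge0 ?nc_ge0 ?ler01 //.
  exact: nat_le_2exp.
apply: lerXn2r; rewrite ?nnegrE ?addr_ge0 ?nc_ge0 ?ler01 //.
  by apply: sumr_ge0 => j _; exact: nc_ge0.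
exact: abound_ge.
Qed.

Lemma diff_bound k (c a : 'I_k -> C) (psi : nat -> C) t :
  (forall n, psi n = \sum_(i < k) c i * coherent (a i) n) -> 0 < t -> t <= 1 ->
  forall n, nc (adag psi n - chi c a t n)
     <= (t * csum c) * (4%:R * abound a) ^+ n / Num.sqrt (n`!%:R).
Proof.
move=> Hpsi t0 t1 n; rewrite (diff_form Hpsi (lt0r_neq0 t0)); apply: le_trans (nc_sum _ _ _) _.
set s := Num.sqrt (n`!%:R : R).
have s0 : 0 < s by exact: sqrt_fact_gt0.
rewrite (_ : t * csum c * (4%:R * abound a) ^+ n / s = csum c * (t * (4%:R * abound a) ^+ n / s)); last by ring.
rewrite /csum mulr_suml.
apply: ler_sum => i _; rewrite ncM ncN nc_div ncM ncM nc_real nc_sf -/s (ger0_norm (ltW t0)).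
rewrite -mulrA -mulrA ler_wpM2l ?nc_ge0 //.
set B := nc (a i) + 1.
have B0 : 0 <= B by rewrite addr_ge0 ?nc_ge0 ?ler01.
have he := en_bound (a i) n (ltW t0) t1; rewrite -/B in he.
have ts0 : 0 <= (t * s)^-1 by rewrite invr_ge0 mulr_ge0 // ltW.
apply: le_trans (_ : 1 * ((t * s)^-1 * (t ^+ 2 * n%:R ^+ 2 * B ^+ n)) <= _).
  apply: ler_pM; [exact: nc_ge0 | by rewrite mulr_ge0 // nc_ge0 | exact: nc_kap | ].
  by rewrite ler_wpM2l.
have -> : 1 * ((t * s)^-1 * (t ^+ 2 * n%:R ^+ 2 * B ^+ n)) = t * (n%:R ^+ 2 * B ^+ n) / s.
  have tn : t != 0 by rewrite gt_eqF.
  have sn : s != 0 by rewrite gt_eqF.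
  rewrite mul1r invfM.
  transitivity ((t^-1 * t) * (t * (n%:R ^+ 2 * B ^+ n)) * s^-1); first by ring.
  by rewrite mulVf // mul1r.
rewrite ler_wpM2r ?invr_ge0 ?(ltW s0) // ler_wpM2l ?(ltW t0) // exprMn.
apply: ler_pM; rewrite ?sqr_ge0 ?exprn_ge0 //.
  exact: nat_sq_le.
apply: lerXn2r; rewrite ?nnegrE //.
  by apply: le_trans (abound_ge1 a); rewrite ler01.
exact: abound_ge.
Qed.

End Part2a.

Section Part2b.
Variable R : realType.
Local Notation C := R[i].
Local Notation nc := (@Normc.normc R).

Definition Sf (f : nat -> C) : nat -> R := fun M => \sum_(0 <= n < M) sqmod (f n).

Lemma inner_re_eq (f g : nat -> C) :
  cvgn (Sf f) -> cvgn (Sf g) -> cvgn (Sf (fun n => f n - g n)) ->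
  inner_re f g = (limn (Sf f) + limn (Sf g) - limn (Sf (fun n => f n - g n))) / 2.
Proof.
move=> cf cg cr; rewrite /inner_re.
have -> : (fun M => \sum_(0 <= n < M) (complex.Re (f n) * complex.Re (g n)
                     + complex.Im (f n) * complex.Im (g n)))
        = (fun M => (Sf f M + Sf g M - Sf (fun n => f n - g n) M) * 2^-1).
  apply/funext => M; rewrite /Sf -big_split -sumrB /= mulr_suml.
  by apply: eq_bigr => n _; rewrite inner_term.
apply: cvg_lim => //; apply: cvgMl; apply: cvgB => //; exact: cvgD.
Qed.


Lemma Sf_cvg (f : nat -> C) (c w : R) : 0 <= c -> 0 <= w ->
  (forall n, nc (f n) <= c * w ^+ n / Num.sqrt (n`!%:R)) ->
  cvgn (Sf f) /\ limn (Sf f) <= c ^+ 2 * expR (w ^+ 2).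
Proof. exact: gen_cvg. Qed.

Lemma Sf_le_lim (f : nat -> C) M : cvgn (Sf f) -> Sf f M <= limn (Sf f).
Proof. exact: psum_le_lim. Qed.

Lemma part2 (k : nat) (psi : nat -> C) :
  has_coherent_rank k psi -> (exists n, psi n != 0) ->
  approx_coherent_rank_le (2 * k)%N (adag psi).
Proof.
move=> [c [a Hpsi]] [n0 hn0] delta d0.
set phi := adag psi.
set c0 := csum c; set A := abound a.
have c00 : 0 <= c0 by exact: csum_ge0.
have A1 : 1 <= A by exact: abound_ge1.
have A0 : 0 <= A by apply: le_trans A1; rewrite ler01.
have [cvP _] := Sf_cvg (c := c0) (w := 2%:R * A) c00 (mulr_ge0 (ler0n _ _) A0) (phi_bound Hpsi).
set P := limn (Sf phi).
have P0 : 0 < P.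
  apply: lt_le_trans (Sf_le_lim n0.+2 cvP).
  rewrite /Sf big_nat_recr //=; apply: ltr_wpDl.
    by apply: sumr_ge0 => n _; exact: sqmod_ge0.
  apply: sqmod_pos; rewrite /phi /adag mulf_neq0 //.
  by rewrite fmorph_eq0 sqrtr_eq0 -ltNge ltr0n.
set e0 := Num.min (1 / 4%:R) (delta / 4%:R).
have e00 : 0 < e0 by rewrite lt_min divr_gt0 ?ltr0n // divr_gt0 ?ltr0n.
have e01 : e0 <= 1 / 4%:R by rewrite ge_min lexx.
have e0d : e0 <= delta / 4%:R by rewrite ge_min lexx orbT.
set X := c0 ^+ 2 * expR ((4%:R * A) ^+ 2).
have X0 : 0 <= X by rewrite mulr_ge0 ?sqr_ge0 ?expR_ge0.
set Y := e0 * P.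
have Y0 : 0 < Y by rewrite mulr_gt0.
set t := Num.min 1 (Y / (X + 1)).
have t0 : 0 < t by rewrite lt_min ltr01 divr_gt0 // ltr_pwDr ?ltr01.
have t1 : t <= 1 by rewrite ge_min lexx.
have tXY : t ^+ 2 * X <= Y.
  have h1 : t <= Y / (X + 1) by rewrite ge_min lexx orbT.
  have h2 : t * X <= Y.
    apply: le_trans (_ : Y / (X + 1) * X <= _); first by rewrite ler_wpM2r.
    rewrite mulrAC ler_pdivrMr ?ltr_pwDr ?ltr01 // ler_wpM2l ?(ltW Y0) //.
    by rewrite lerDl ler01.
  apply: le_trans h2; rewrite expr2 -mulrA ler_piMl ?mulr_ge0 ?(ltW t0) //.
set ch := chi c a t.
exists ch; split.
  by rewrite mul2n -addnn; exists (cc c a t), (bb a t).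
set r := fun n => phi n - ch n.
have [cvR hR] := Sf_cvg (c := t * c0) (w := 4%:R * A) (mulr_ge0 (ltW t0) c00)
  (mulr_ge0 (ler0n _ _) A0) (diff_bound Hpsi t0 t1).
set rho := limn (Sf r).
have rhoY : rho <= Y by apply: le_trans hR _; rewrite exprMn -mulrA.
have rho0 : 0 <= rho.
  apply: le_trans (Sf_le_lim 0 cvR); by rewrite /Sf big_geq.
have chb n : nc (ch n) <= (c0 + t * c0) * (4%:R * A) ^+ n / Num.sqrt (n`!%:R).
  have -> : ch n = phi n - r n by rewrite /r opprB addrC subrK.
  apply: le_trans (ncB _ _) _.
  rewrite mulrDl mulrDl; apply: lerD; last exact: (diff_bound Hpsi t0 t1).
  apply: le_trans (phi_bound Hpsi n) _.
  rewrite ler_wpM2r ?invr_ge0 ?sqrtr_ge0 // ler_wpM2l //.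
  apply: lerXn2r; rewrite ?nnegrE ?mulr_ge0 ?ler0n //.
  by rewrite ler_wpM2r // ler_nat.
have [cvQ _] := Sf_cvg (addr_ge0 c00 (mulr_ge0 (ltW t0) c00))
  (mulr_ge0 (ler0n _ _) A0) chb.
set Q := limn (Sf ch).
have PQ : P <= 2%:R * Q + 2%:R * rho.
  apply: limr_le => //; apply: nearW => M.
  apply: le_trans (_ : 2%:R * Sf ch M + 2%:R * Sf r M <= _); last first.
    by apply: lerD; rewrite ler_wpM2l ?ler0n // Sf_le_lim.
  rewrite /Sf !mulr_sumr -big_split /=; apply: ler_sum => n _.
  have -> : phi n = ch n + r n by rewrite /r addrC subrK.
  exact: sqmodD2.
have hIre : inner_re phi ch = (P + Q - rho) / 2 by exact: inner_re_eq.
rewrite /fidelity hIre.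
have -> : sqnorm phi = P by [].
have -> : sqnorm ch = Q by [].
have rP : rho <= e0 * P by [].
have Q4 : P <= 4%:R * Q.
  have : 2%:R * rho <= P / 2%:R.
    apply: le_trans (_ : 2%:R * (e0 * P) <= _); first by rewrite ler_wpM2l ?ler0n.
    have : e0 * P <= 1 / 4%:R * P by rewrite ler_wpM2r // ltW.
    lra.
  lra.
have Q0 : 0 < Q by lra.
rewrite ltr_pdivlMr ?mulr_gt0 //.
have I0 : 0 <= inner_im phi ch ^+ 2 by exact: sqr_ge0.
have PQ0 : 0 <= P + Q by lra.
have P0' : 0 <= P by lra.
have e0' : 0 <= e0 by lra.
have PQ1 : 0 <= P * Q by rewrite mulr_ge0 // ltW.
have h1 : rho * (P + Q) <= e0 * P * (P + Q) by rewrite ler_wpM2r.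
have h2 : P * P <= 4%:R * (P * Q) by rewrite mulrCA ler_wpM2l.
have h3 : e0 * (P * P) <= e0 * (4%:R * (P * Q)) by rewrite ler_wpM2l.
have h4 : e0 * (P * Q) <= delta / 4%:R * (P * Q) by rewrite ler_wpM2r.
have h5 : 0 < delta * (P * Q) by rewrite !mulr_gt0.
have h6 : 0 <= (P - Q) ^+ 2 by exact: sqr_ge0.
have h7 : 0 <= rho ^+ 2 by exact: sqr_ge0.
have -> : ((P + Q - rho) / 2) ^+ 2 = ((P - Q) ^+ 2 + 4%:R * (P * Q) - 2%:R * (rho * (P + Q)) + rho ^+ 2) / 4%:R.
  by field.
rewrite (_ : e0 * P * (P + Q) = e0 * (P * P) + e0 * (P * Q)) in h1; last by ring.
lra.
Qed.

End Part2b.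

Theorem proposition5 (R : realType) (k : nat) (psi : nat -> R[i]) :
  has_coherent_rank k psi ->
  (exists n, psi n != 0) ->
  (exists (K d : R), 0 < d /\
     forall eps : R, eps != 0 -> `|eps| < d ->
       forall M : nat,
         \sum_(n < M)
            sqmod (adag psi n
                   - (eps^-1)%:C *
                       proj_aux_vac (beamsplitter (2 * eps) (tensor_fock1 psi)) n)
         <= (K * eps ^+ 2) ^+ 2)
  /\ approx_coherent_rank_le (2 * k)%N (adag psi).
Proof.
move=> Hc Hn; split. exact: (part1 Hc). exact: (part2 Hc Hn).
Qed.
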